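(* Let $R$ be a commutative Noetherian semiring and $I$ a $k$-ideal of $R$. If $I=\bigcap_{i=1}^n Q_i$ is a reduced primary decomposition of $I$ with $\sqrt{Q_i}=P_i$ for $i=1,\dots,n$, then $$\{P_1,\dots,P_n\}=\{P \text{ prime ideal of } R \mid \exists\, x\in R \text{ such that } P=\sqrt{(I:x)}\}.$$ In particular, the set $\{P_1,\dots,P_n\}$ is independent of the particular reduced primary decomposition chosen for $I$.
   Context: A semiring is a set $R$ with addition and multiplication such that $(R,+)$ is a commutative monoid with identity $0$, $(R,\cdot)$ is a monoid with identity $1$, multiplication distributes over addition on both sides, $0\cdot r=0=r\cdot 0$ for all $r$, and $1\neq 0$. $R$ is commutative if $(R,\cdot)$ is commutative. An ideal of $R$ is a nonempty subset closed under addition and under multiplication by arbitrary elements of $R$. $R$ is Noetherian if it satisfies the ascending chain condition on ideals. An ideal $I$ is a $k$-ideal if $x+y\in I$ and $x\in I$ imply $y\in I$. A proper ideal $P$ is prime if $ab\in P$ implies $a\in P$ or $b\in P$. The radical of an ideal $I$ is $\sqrt{I}=\{a\in R\mid a^n\in I \text{ for some } n\ge 1\}$. A proper ideal $Q$ is primary if $xy\in Q$ implies $x\in Q$ or $y\in\sqrt{Q}$. For $x\in R$, $(I:x)=\{r\in R\mid rx\in I\}$. A primary decomposition $I=\bigcap_{i=1}^n Q_i$ (each $Q_i$ primary, $P_i=\sqrt{Q_i}$) is reduced if the $P_i$ are pairwise distinct and $I$ is not the intersection of any proper subfamily of the $Q_i$. *)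

(* Defs.v *)
(* A commutative semiring with 1 <> 0 in which 0 is absorbing
   is exactly MathComp's comNzSemiRingType. Ideals are Prop-valued subsets. *)
From mathcomp Require Import all_boot all_algebra.
Set Implicit Arguments. Unset Strict Implicit. Unset Printing Implicit Defensive.
Import GRing.Theory.
Local Open Scope ring_scope.

Section SemiringIdeals.
Variable R : comNzSemiRingType.

Definition subsetR (A B : R -> Prop) := forall x, A x -> B x.
Definition eqsetR (A B : R -> Prop) := forall x, A x <-> B x.

Definition ideal (I : R -> Prop) : Prop :=
  (exists x, I x) /\
  (forall x y, I x -> I y -> I (x + y)) /\
  (forall r x, I x -> I (r * x)).

Definition proper (I : R -> Prop) : Prop := exists x, ~ I x.

Definition noetherian : Prop :=
  forall J : nat -> R -> Prop,
    (forall n, ideal (J n)) ->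
    (forall n, subsetR (J n) (J n.+1)) ->
    exists N, forall m, (N <= m)%N -> eqsetR (J m) (J N).

Definition k_ideal (I : R -> Prop) : Prop :=
  ideal I /\ forall x y, I (x + y) -> I x -> I y.

Definition prime_ideal (P : R -> Prop) : Prop :=
  ideal P /\ proper P /\ forall a b, P (a * b) -> P a \/ P b.

Definition radical (I : R -> Prop) : R -> Prop :=
  fun a => exists n, (1 <= n)%N /\ I (a ^+ n).

Definition primary_ideal (Q : R -> Prop) : Prop :=
  ideal Q /\ proper Q /\ forall x y, Q (x * y) -> Q x \/ radical Q y.

Definition colon (I : R -> Prop) (x : R) : R -> Prop := fun r => I (r * x).

Definition reduced_primary_decomposition (I : R -> Prop) (n : nat)
    (Q : 'I_n -> R -> Prop) : Prop :=
  (forall i, primary_ideal (Q i)) /\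
  eqsetR I (fun x => forall i, Q i x) /\
  (forall i j, eqsetR (radical (Q i)) (radical (Q j)) -> i = j) /\
  (forall S : {set 'I_n}, S != setT ->
      ~ eqsetR I (fun x => forall i, i \in S -> Q i x)).

End SemiringIdeals.

(* Main.v *)
Require Import Defs.
From mathcomp Require Import all_boot all_algebra.
From Stdlib Require Import Classical.
From mathcomp Require Import zify ring.

Set Implicit Arguments. Unset Strict Implicit. Unset Printing Implicit Defensive.
Import GRing.Theory.

Section Aux.
Local Open Scope ring_scope.
Variable R : comNzSemiRingType.
Implicit Types (I Q P : R -> Prop).

Lemma id0 I : ideal I -> I 0.
Proof. move=> [[y Hy] [_ HM]]. by rewrite -(mul0r y); apply: HM. Qed.

Lemma idMr I x r : ideal I -> I x -> I (x * r).
Proof. move=> [_ [_ HM]] Hx; rewrite mulrC; exact: HM. Qed.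

Lemma idMl I x r : ideal I -> I x -> I (r * x).
Proof. move=> [_ [_ HM]] Hx; exact: HM. Qed.

Lemma idD I x y : ideal I -> I x -> I y -> I (x + y).
Proof. move=> [_ [HD _]]; exact: HD. Qed.

Lemma id_pow I a n m : ideal I -> I (a ^+ n) -> (n <= m)%N -> I (a ^+ m).
Proof.
move=> HI Ha Hnm; rewrite -(subnK Hnm) exprD; exact: idMl.
Qed.

Lemma rad_ideal Q : ideal Q -> ideal (radical Q).
Proof.
move=> HQ; split; first by exists 0; exists 1%N; split=> //; rewrite expr1; exact: id0.
split.
- move=> x y [n [Hn Hx]] [m [Hm Hy]]; exists (n + m)%N; split; first by rewrite addn_gt0 Hn.
  rewrite exprDn; apply: (big_ind Q); first exact: id0.
  + move=> u v; exact: idD.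
  + move=> i _; rewrite -mulr_natl; apply: idMl=> //.
    case: (leqP n (n + m - i)) => Hi.
    * rewrite mulrC; apply: idMl => //; exact: (id_pow HQ Hx Hi).
    * apply: idMl => //; apply: (id_pow HQ Hy).
      have := ltn_ord i; lia.
- move=> r x [n [Hn Hx]]; exists n; split=> //; rewrite exprMn; exact: idMl.
Qed.

Lemma not1 P : ideal P -> Defs.proper P -> ~ P 1.
Proof. move=> HP [y Hy] H1; apply: Hy; rewrite -(mulr1 y); exact: idMl. Qed.

Lemma radK Q a n : (1 <= n)%N -> radical Q (a ^+ n) -> radical Q a.
Proof.
move=> Hn [m [Hm H]]; exists (n * m)%N; split; first by rewrite muln_gt0 Hn.
by rewrite exprM.
Qed.

Lemma rad_prime Q : primary_ideal Q -> prime_ideal (radical Q).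
Proof.
move=> [HQ [HpQ Hpr]]; split; first exact: rad_ideal.
split.
- exists 1 => -[n [_ H]]; apply: (not1 HQ HpQ); by rewrite expr1n in H.
- move=> a b [n [Hn H]]; rewrite exprMn in H.
  case: (Hpr _ _ H) => [Ha|Hb]; [left; by exists n | right; exact: radK Hb].
Qed.

Lemma sub_rad Q : ideal Q -> forall a, Q a -> radical Q a.
Proof. by move=> _ a Ha; exists 1%N; rewrite expr1. Qed.

End Aux.

Theorem theorem2p13 (R : comNzSemiRingType) (I : R -> Prop) (n : nat)
    (Q : 'I_n -> R -> Prop) :
  noetherian R -> k_ideal I -> reduced_primary_decomposition I Q ->
  forall P : R -> Prop,
    (exists i : 'I_n, eqsetR P (radical (Q i))) <->
    (prime_ideal P /\ exists x : R, eqsetR P (radical (colon I x))).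
Proof.
Local Open Scope ring_scope.
move=> _ [HIid _] [Hprim [HI [_ Hred]]] P; split.
- move=> [i HPi].
  have [Hid [Hpp Hpr]] := rad_prime (Hprim i).
  split.
    split; last split.
    + case: Hid => [[y0 Hy0] [HD HM]]; split; first by exists y0; apply/HPi.
      split; [move=> x y /HPi Hx /HPi Hy; apply/HPi; exact: HD
             | move=> r x /HPi Hx; apply/HPi; exact: HM].
    + case: Hpp => y Hy; exists y => /HPi; exact: Hy.
    + move=> a b /HPi /Hpr [] H; [left|right]; exact/HPi.
  have Hne : [set j | j != i] != setT.
    apply/negP => /eqP E; have : i \in [set j | j != i] by rewrite E inE.
    by rewrite inE eqxx.
  have := Hred _ Hne.
  move=> /not_all_ex_not [y Hy].
  have HyS : forall j, j != i -> Q j y.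
    move=> j Hj; apply: NNPP => Hn; apply: Hy; split.
      by move=> /HI H k _; exact: H.
    by move=> H; exfalso; apply: Hn; apply: H; rewrite inE.
  have HyQi : ~ Q i y.
    move=> Hq; apply: Hy; split; first by move=> /HI H j _; exact: H.
    move=> _; apply/HI => j; case: (eqVneq j i) => [->|Hj] //; exact: HyS.
  have [HQi [_ HprQ]] := Hprim i.
  exists y => z; rewrite HPi; split.
  + move=> [m [Hm Hz]]; exists m; split=> //; apply/HI => j.
    case: (eqVneq j i) => [->|Hj].
    * exact: idMr.
    * apply: idMl; [exact: (Hprim j).1 | exact: HyS].
  + move=> [m [Hm Hz]]; move/HI: Hz => /(_ i); rewrite mulrC => /HprQ [] // H.
    exact: radK H.
- move=> [[HPid [HPp HPpr]] [x Hx]].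
  apply: NNPP => Hno.
  have Hnot : forall i, ~ eqsetR P (radical (Q i)) by move=> i Hi; apply: Hno; exists i.
  have H1 := not1 HPid HPp.
  have Hper : forall i, exists a k, ~ P a /\ Q i (a ^+ k * x).
    move=> i; have [HQi [_ HprQ]] := Hprim i.
    case: (classic (Q i x)) => Hxi.
      by exists 1, 0%N; split=> //; rewrite expr0 mul1r.
    have Hsub : forall a, P a -> radical (Q i) a.
      move=> a /Hx [m [Hm Ha]]; move/HI: Ha => /(_ i); rewrite mulrC => /HprQ [] // H.
      exact: radK H.
    have := Hnot i => /not_all_ex_not [a Ha].
    have HPa : ~ P a by move=> Hp; apply: Ha; split=> // _; exact: Hsub.
    have [k [Hk Hak]] : radical (Q i) a.
      apply: NNPP => Hr; apply: Ha; split; [by move=> /Hsub | by move=> /Hr].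
    by exists a, k; split=> //; apply: idMr.
  have Hall : forall s : seq 'I_n, exists b m, ~ P b /\ forall j, j \in s -> Q j (b ^+ m * x).
    elim => [|i s [b [m [Hb Hs]]]]; first by exists 1, 0%N; split.
    have [a [k [Ha Hak]]] := Hper i.
    exists (a * b), (m + k)%N; split.
      by move=> /HPpr [].
    move=> j; rewrite inE => /orP [/eqP ->|Hj].
    * have -> : (a * b) ^+ (m + k) * x = (a ^+ m * b ^+ (m + k)) * (a ^+ k * x).
        by rewrite exprMn !exprD; ring.
      apply: idMl => //; exact: (Hprim i).1.
    * have -> : (a * b) ^+ (m + k) * x = (a ^+ (m + k) * b ^+ k) * (b ^+ m * x).
        by rewrite exprMn !exprD; ring.
      apply: idMl; [exact: (Hprim j).1 | exact: Hs].
  have [b [m [Hb Hs]]] := Hall (index_enum 'I_n).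
  apply: Hb; apply/Hx; exists m.+1; split=> //.
  rewrite /colon exprS -mulrA; apply: idMl; first exact: HIid.
  apply/(proj2 (HI _)) => j; apply: Hs; exact: mem_index_enum.
Qed.
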